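(* Let $d\ge1$, $\Omega_s<0$, $\mathbf{\Omega}_a\in\mathbb{R}^{d\times d}$ skew-symmetric, $\mathbf{\Omega}=\Omega_s\mathbf{I}+\mathbf{\Omega}_a$, $D>0$, $\Sigma_0>0$, $\mathbf{m}_0\in\mathbb{R}^d$, $T>0$, $\epsilon\ge0$, and let $\hat{\mathbf{D}}\in\mathbb{R}^{d\times d}$ be symmetric. Let $\mathbf{m}_t=e^{\mathbf{\Omega}t}\mathbf{m}_0$ and $\sigma_t^2=\Sigma_0e^{2\Omega_st}+D(e^{2\Omega_st}-1)/\Omega_s$. Set $\mathbf{P}=\int_0^T\mathbf{m}_t\mathbf{m}_t^Tdt$ with eigendecomposition $\mathbf{P}=\sum_{i=1}^d\gamma_i\mathbf{u}_i\mathbf{u}_i^T$ ($\{\mathbf{u}_i\}$ orthonormal, $\gamma_1\ge\dots\ge\gamma_d\ge0$), let $l=\mathrm{rank}(\mathbf{P})$, let $\mathbf{Q}$ be the orthogonal projector onto $\mathrm{range}(\mathbf{P})$, let $\mu_{ij}=\mathbf{u}_i^T(\hat{\mathbf{D}}-D\mathbf{I})\mathbf{u}_j$, and $$q=\int_0^T\frac{\sigma_t^4}{\sqrt{\epsilon^2/16+\sigma_t^4}}dt,\qquad r=\int_0^T\frac{\sigma_t^2}{\sqrt{\epsilon^2/16+\sigma_t^4}}dt.$$ Consider, for $\hat{\mathbf{\Omega}}\in\mathbb{R}^{d\times d}$, the unregularized function $$\mathcal{L}_\epsilon(\hat{\mathbf{\Omega}})=\mathrm{tr}\Big((\hat{\mathbf{\Omega}}-\mathbf{\Omega})^T(\hat{\mathbf{\Omega}}-\mathbf{\Omega})\mathbf{P}+\tfrac{q}{4}(\hat{\mathbf{\Omega}}+\hat{\mathbf{\Omega}}^T-2\Omega_s\mathbf{I})^2+r(\hat{\mathbf{\Omega}}+\hat{\mathbf{\Omega}}^T-2\Omega_s\mathbf{I})(\hat{\mathbf{D}}-D\mathbf{I})\Big).$$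 Then the minimizers of $\mathcal{L}_\epsilon$ over $\mathbb{R}^{d\times d}$ are exactly the matrices $$\hat{\mathbf{\Omega}}=\mathbf{\Omega}-rq^{-1}(\mathbf{I}-\mathbf{Q})(\hat{\mathbf{D}}-D\mathbf{I})(\mathbf{I}-\mathbf{Q})-2\sum_{i=1}^{l}\sum_{j=1}^{d}\frac{\gamma_i\,rq^{-1}\mu_{ij}}{2q^{-1}\gamma_i\gamma_j+\gamma_i+\gamma_j}\mathbf{u}_i\mathbf{u}_j^T+\mathbf{K},$$ where $\mathbf{K}$ ranges over skew-symmetric matrices with $\mathbf{K}\mathbf{P}=0$. The minimizer is unique if and only if $\mathrm{rank}(\mathbf{P})\ge d-1$.
   Context: This is the $\lambda=0$ (no regularization) continuous-time limit of the Sinkhorn-divergence (entropic regularization $\epsilon$) inference loss for a linear force $\hat{\mathbf{\Omega}}\mathbf{x}$ with assumed diffusion $\hat{\mathbf{D}}$ for the isotropic Ornstein–Uhlenbeck process $d\mathbf{x}=\mathbf{\Omega}\mathbf{x}dt+\sqrt{2D}d\mathbf{W}$, $\mathbf{x}_0\sim\mathcal{N}(\mathbf{m}_0,\Sigma_0\mathbf{I})$; the claim concerns the explicit function above. *)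

(* Defs.v *)
From HB Require Import structures.
From mathcomp Require Import all_boot all_order all_algebra.
From mathcomp Require Import all_classical all_reals all_analysis.
Set Implicit Arguments. Unset Strict Implicit. Unset Printing Implicit Defensive.
Import Order.TTheory GRing.Theory Num.Theory.
Import numFieldNormedType.Exports.
Local Open Scope ring_scope.
Local Open Scope classical_set_scope.

Section OUDefs.
Variables (R : realType) (d : nat).

Definition mxpow (A : 'M[R]_d) (k : nat) : 'M[R]_d := iter k (mulmx A) 1%:M.

Definition expmx (A : 'M[R]_d) : 'M[R]_d :=
  \matrix_(i, j) limn (fun N : nat =>
     ((\sum_(k < N) (k`!%:R)^-1 *: mxpow A k) i j : R)).

Definition mean_t (Om : 'M[R]_d) (m0 : 'cV[R]_d) (t : R) : 'cV[R]_d :=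
  expmx (t *: Om) *m m0.

Definition sigma2 (Os D Sig0 t : R) : R :=
  Sig0 * expR (2 * Os * t) + D * (expR (2 * Os * t) - 1) / Os.

Definition Pmat (Om : 'M[R]_d) (m0 : 'cV[R]_d) (T : R) : 'M[R]_d :=
  \matrix_(i, j) Rintegral (@lebesgue_measure R) `[0, T]
     (fun t => (mean_t Om m0 t) i 0 * (mean_t Om m0 t) j 0).

Definition qval (Os D Sig0 T eps : R) : R :=
  Rintegral (@lebesgue_measure R) `[0, T]
    (fun t => sigma2 Os D Sig0 t ^+ 2 /
              Num.sqrt (eps ^+ 2 / 16 + sigma2 Os D Sig0 t ^+ 2)).

Definition rval (Os D Sig0 T eps : R) : R :=
  Rintegral (@lebesgue_measure R) `[0, T]
    (fun t => sigma2 Os D Sig0 t /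
              Num.sqrt (eps ^+ 2 / 16 + sigma2 Os D Sig0 t ^+ 2)).

Definition lossL (Om P Dh : 'M[R]_d) (Os D q r : R) (X : 'M[R]_d) : R :=
  let S := X + X^T - (2 * Os)%:M in
  \tr ((X - Om)^T *m (X - Om) *m P
       + (q / 4) *: (S *m S)
       + r *: (S *m (Dh - D%:M))).

Definition is_minimizer (f : 'M[R]_d -> R) (X : 'M[R]_d) : Prop :=
  forall Y : 'M[R]_d, f X <= f Y.

End OUDefs.

(* Main.v *)
Require Import Defs.
From HB Require Import structures.
From mathcomp Require Import all_boot all_order all_algebra.
From mathcomp Require Import all_classical all_reals all_analysis.
From mathcomp Require Import lra ring zify.
Import Order.TTheory GRing.Theory Num.Theory.
Local Open Scope ring_scope.

Module QPos.
Import numFieldNormedType.Exports.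
Local Open Scope classical_set_scope.
Section Q.
Variable R : realType.

Let cD (f g : R -> R) x : {for x, continuous f} -> {for x, continuous g} -> {for x, continuous (fun t => f t + g t)}.
Proof. exact: continuousD. Qed.
Let cB (f g : R -> R) x : {for x, continuous f} -> {for x, continuous g} -> {for x, continuous (fun t => f t - g t)}.
Proof. exact: continuousB. Qed.
Let cM (f g : R -> R) x : {for x, continuous f} -> {for x, continuous g} -> {for x, continuous (fun t => f t * g t)}.
Proof. exact: continuousM. Qed.
Let cV (f : R -> R) x : f x != 0 -> {for x, continuous f} -> {for x, continuous (fun t => (f t)^-1)}.
Proof. exact: continuousV. Qed.
Let cC (c : R) x : {for x, continuous (fun _ : R => c)}.
Proof. exact: cvg_cst. Qed.
Let cI x : {for x, continuous (fun t : R => t)}.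
Proof. exact: cvg_id. Qed.
Let cE (f : R -> R) x : {for x, continuous f} -> {for x, continuous (fun t => expR (f t))}.
Proof. move=> h; apply: (continuous_comp h); exact: continuous_expR. Qed.
Let cS (f : R -> R) x : {for x, continuous f} -> {for x, continuous (fun t => Num.sqrt (f t))}.
Proof. move=> h; apply: (@continuous_comp _ _ _ f (@Num.sqrt R) x h); exact: sqrt_continuous. Qed.
Let cX (f : R -> R) x : {for x, continuous f} -> {for x, continuous (fun t => (f t) ^+ 2)}.
Proof. move=> h; apply: (@continuous_comp _ _ _ f (fun y : R => y ^+ 2) x h); exact: exprn_continuous. Qed.

Lemma sigma2_cont (Os D Sig0 : R) : continuous (sigma2 Os D Sig0).
Proof.
move=> t; rewrite /sigma2.
apply: (@cD (fun t0 => Sig0 * expR (2 * Os * t0)) (fun t0 => D * (expR (2 * Os * t0) - 1) / Os)).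
  apply: cM; first exact: cC. apply: cE; apply: cM; [exact: cC|exact: cI].
apply: cM; last exact: cC. apply: cM; first exact: cC.
apply: cB; last exact: cC. apply: cE; apply: cM; [exact: cC|exact: cI].
Qed.

Lemma sigma2_bounds (Os D Sig0 T t : R) : Os < 0 -> 0 < D -> 0 < Sig0 ->
  0 <= t -> t <= T ->
  Sig0 * expR (2 * Os * T) <= sigma2 Os D Sig0 t <= Sig0 - D / Os.
Proof.
move=> Os0 D0 S0 t0 tT; rewrite /sigma2.
set e := expR (2 * Os * t).
have e1 : e <= 1 by rewrite /e expR_le1; nra.
have e0 : 0 < e by exact: expR_gt0.
have eT : expR (2 * Os * T) <= e by rewrite /e ler_expR; nra.
have iO : Os^-1 < 0 by rewrite invr_lt0.
have OiO : Os * Os^-1 = 1 by rewrite divff // lt_eqF.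
have h1 : 0 <= D * (e - 1) / Os.
  by apply: mulr_le0; [apply: mulr_ge0_le0; [exact: ltW|lra]|exact: ltW].
have h2 : D * e / Os <= 0.
  by apply: mulr_ge0_le0; [apply: mulr_ge0; exact: ltW|exact: ltW].
have h3 : D * (e - 1) / Os = D * e / Os - D / Os by rewrite mulrBr mulr1 mulrBl.
have h4 : Sig0 * expR (2 * Os * T) <= Sig0 * e by rewrite ler_pM2l.
have h5 : Sig0 * e <= Sig0 by rewrite ler_piMr // ltW.
apply/andP; split; lra.
Qed.

Lemma qval_gt0 (Os D Sig0 T eps : R) : Os < 0 -> 0 < D -> 0 < Sig0 -> 0 < T ->
  0 < qval Os D Sig0 T eps.
Proof.
move=> Os0 D0 S0 T0.
set m := Sig0 * expR (2 * Os * T).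
set Mx := Sig0 - D / Os.
set a := eps ^+ 2 / 16.
have a0 : 0 <= a by rewrite /a divr_ge0 // sqr_ge0.
have m0 : 0 < m by rewrite /m mulr_gt0 // expR_gt0.
set f := fun t => sigma2 Os D Sig0 t ^+ 2 / Num.sqrt (a + sigma2 Os D Sig0 t ^+ 2).
set c := m ^+ 2 / Num.sqrt (a + Mx ^+ 2).
have inI : forall t, 0 <= t <= T -> m <= sigma2 Os D Sig0 t <= Mx.
  move=> t /andP[t0 tT]; exact: sigma2_bounds.
have Mm : m <= Mx.
  have h0 : (0:R) <= 0 <= T by rewrite lexx ltW.
  by have /andP[h1 h2] := inI 0 h0; apply: le_trans h2.
have c0 : 0 < c.
  rewrite /c divr_gt0 ?exprn_gt0 // sqrtr_gt0; apply: ltr_wpDl => //; apply: exprn_gt0; exact: lt_le_trans Mm.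
have fc : forall t, 0 <= t <= T -> c <= f t.
  move=> t /inI /andP[h1 h2]; rewrite /c /f.
  have s0 : 0 < sigma2 Os D Sig0 t by exact: lt_le_trans h1.
  have q1 : 0 < Num.sqrt (a + sigma2 Os D Sig0 t ^+ 2).
    by rewrite sqrtr_gt0; apply: ltr_wpDl => //; apply: exprn_gt0.
  have q2 : Num.sqrt (a + sigma2 Os D Sig0 t ^+ 2) <= Num.sqrt (a + Mx ^+ 2).
    rewrite ler_sqrt; last by apply: addr_ge0 => //; apply: sqr_ge0.
    rewrite lerD2l; nra.
  apply: ler_pM.
  - exact: sqr_ge0.
  - by rewrite invr_ge0 sqrtr_ge0.
  - nra.
  - by rewrite lef_pV2 // posrE // (lt_le_trans q1 q2).
have fcont : {within `[0, T], continuous f}.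
  apply: continuous_in_subspaceT => t /set_mem /=; rewrite in_itv /= => /[dup] tI /inI /andP[h1 _].
  have s0 : 0 < sigma2 Os D Sig0 t by exact: lt_le_trans h1.
  rewrite /f; apply: (@cM (fun t => sigma2 Os D Sig0 t ^+ 2)).
    apply: cX; exact: sigma2_cont.
  apply: cV.
    by rewrite gt_eqF // sqrtr_gt0; apply: ltr_wpDl => //; apply: exprn_gt0.
  apply: cS; apply: cD; first exact: cC. apply: cX; exact: sigma2_cont.
have fint : (@lebesgue_measure R).-integrable `[0, T] (EFin \o f).
  apply: continuous_compact_integrable => //; exact: segment_compact.
have cint : (@lebesgue_measure R).-integrable `[0, T] (EFin \o (fun _ : R => c)).
  apply: continuous_compact_integrable; first exact: segment_compact.
  apply: continuous_subspaceT => x; exact: cC.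
have := le_Rintegral _ cint fint.
have hT : fine (@lebesgue_measure R `[0, T]) = T.
  by rewrite lebesgue_measure_itv /= lte_fin T0 /= subr0.
rewrite Rintegral_cst; last exact: measurable_itv.
move=> H.
have fc' : forall x, `[0, T] x -> c <= f x.
  by move=> x /=; rewrite in_itv /=; exact: fc.
rewrite /qval; apply: (lt_le_trans _ (H _ fc')).
  rewrite hT; exact: mulr_gt0.
exact: measurable_itv.
Qed.

End Q.
End QPos.
Import QPos.

Section Tr.
Variable R : realType.

Lemma trmxD m n (A B : 'M[R]_(m, n)) : (A + B)^T = A^T + B^T.
Proof. exact: linearD. Qed.
Lemma trmxN m n (A : 'M[R]_(m, n)) : (- A)^T = - A^T.
Proof. exact: linearN. Qed.
Lemma trmxB m n (A B : 'M[R]_(m, n)) : (A - B)^T = A^T - B^T.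
Proof. exact: linearB. Qed.
Lemma trmxZ m n a (A : 'M[R]_(m, n)) : (a *: A)^T = a *: A^T.
Proof. exact: linearZ. Qed.

Lemma tr_AtA m n (A : 'M[R]_(m, n)) :
  \tr (A^T *m A) = \sum_(i < n) \sum_(k < m) A k i ^+ 2.
Proof.
rewrite /mxtrace; apply: eq_bigr => i _; rewrite mxE; apply: eq_bigr => k _.
by rewrite mxE expr2.
Qed.

Lemma tr_AtA_ge0 m n (A : 'M[R]_(m, n)) : 0 <= \tr (A^T *m A).
Proof.
by rewrite tr_AtA; apply: sumr_ge0 => i _; apply: sumr_ge0 => k _; exact: sqr_ge0.
Qed.

Lemma tr_AtA_eq0 m n (A : 'M[R]_(m, n)) : \tr (A^T *m A) = 0 -> A = 0.
Proof.
rewrite tr_AtA => h; apply/matrixP => k i; rewrite mxE.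
have h1 := psumr_eq0P (fun i _ => sumr_ge0 _ (fun k _ => sqr_ge0 (A k i))) h.
have h2 := psumr_eq0P (fun k _ => sqr_ge0 (A k i)) (h1 i isT).
by apply/eqP; rewrite -sqrf_eq0; apply/eqP; exact: h2.
Qed.

Variable d : nat.
Implicit Types A B S M P Y Z W : 'M[R]_d.

Lemma tr_sym_split S Z : S^T = S -> \tr (S *m (Z + Z^T)) = 2 * \tr (Z^T *m S).
Proof.
move=> hS; rewrite mulmxDr mxtraceD.
have e1 : \tr (S *m Z^T) = \tr (Z^T *m S) by rewrite mxtrace_mulC.
have e2 : \tr (S *m Z) = \tr (Z^T *m S).
  by rewrite -mxtrace_tr trmx_mul hS.
by rewrite e1 e2 mulr2n mulrDl mul1r.
Qed.

Definition Fq P M (q r : R) W :=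
  \tr (W^T *m W *m P) + q / 4 * \tr ((W + W^T) *m (W + W^T)) + r * \tr ((W + W^T) *m M).

Definition Gq P M (q r : R) Y := Y *m P + (q / 2) *: (Y + Y^T) + r *: M.

Definition Bq P (q : R) Z := \tr (Z^T *m Z *m P) + q / 4 * \tr ((Z + Z^T) *m (Z + Z^T)).

Lemma lossL_shift Om P Dh Os D q r W : Om^T = (2 * Os)%:M - Om ->
  lossL Om P Dh Os D q r (Om + W) = Fq P (Dh - D%:M) q r W.
Proof.
move=> hO; rewrite /lossL /Fq.
have -> : Om + W - Om = W by rewrite addrAC subrr add0r.
have -> : Om + W + (Om + W)^T - (2 * Os)%:M = W + W^T.
  by rewrite trmxD hO; apply/matrixP => i j; rewrite !mxE; ring.
by rewrite !mxtraceD !mxtraceZ.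
Qed.

Lemma tr_sq_add A B : \tr ((A + B) *m (A + B)) = \tr (A *m A) + 2 * \tr (A *m B) + \tr (B *m B).
Proof.
rewrite mulmxDl !mulmxDr !mxtraceD (mxtrace_mulC B A); ring.
Qed.

Lemma tr_addl_mul A B C : \tr ((A + B) *m C) = \tr (A *m C) + \tr (B *m C).
Proof. by rewrite mulmxDl mxtraceD. Qed.

Lemma Fq_expand P M q r Y Z : P^T = P -> M^T = M ->
  Fq P M q r (Y + Z) = Fq P M q r Y + 2 * \tr (Z^T *m Gq P M q r Y) + Bq P q Z.
Proof.
move=> hP hM; rewrite /Fq /Gq /Bq.
have -> : Y + Z + (Y + Z)^T = (Y + Y^T) + (Z + Z^T) by rewrite trmxD addrACA.
have hSY : (Y + Y^T)^T = Y + Y^T by rewrite trmxD trmxK addrC.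
have e1 : \tr (Y^T *m Z *m P) = \tr (Z^T *m Y *m P).
  by rewrite -mxtrace_tr !trmx_mul hP trmxK mxtrace_mulC.
have hA : \tr ((Y + Z)^T *m (Y + Z) *m P) =
   \tr (Y^T *m Y *m P) + 2 * \tr (Z^T *m Y *m P) + \tr (Z^T *m Z *m P).
  rewrite trmxD !mulmxDl !mulmxDr !mulmxDl !mxtraceD e1; ring.
have e2 : \tr ((Y + Y^T) *m (Z + Z^T)) = 2 * \tr (Z^T *m (Y + Y^T)) by rewrite tr_sym_split.
have e3 : \tr ((Z + Z^T) *m M) = 2 * \tr (Z^T *m M) by rewrite mxtrace_mulC tr_sym_split.
have hG : \tr (Z^T *m (Y *m P + (q / 2) *: (Y + Y^T) + r *: M)) =
   \tr (Z^T *m Y *m P) + q / 2 * \tr (Z^T *m (Y + Y^T)) + r * \tr (Z^T *m M).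
  by rewrite !mulmxDr !mxtraceD -!scalemxAr !mxtraceZ mulmxA ?mulmxDr ?mxtraceD.
rewrite hA (tr_sq_add (Y + Y^T) (Z + Z^T)) (tr_addl_mul (Y + Y^T) (Z + Z^T) M) e2 e3 hG; field; rewrite ?pnatr_eq0 //.
Qed.

Lemma trZZP (gam : 'I_d -> R) (U P Z : 'M[R]_d) :
  P = \sum_(k < d) gam k *: (col k U *m (col k U)^T) ->
  \tr (Z^T *m Z *m P) = \sum_(k < d) gam k * \tr ((Z *m col k U)^T *m (Z *m col k U)).
Proof.
move=> ->; rewrite mulmx_sumr raddf_sum; apply: eq_bigr => k _.
rewrite -scalemxAr; change (\tr (gam k *: (Z^T *m Z *m (col k U *m (col k U)^T))) = gam k * \tr ((Z *m col k U)^T *m (Z *m col k U))); rewrite mxtraceZ; congr (_ * _).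
by rewrite mulmxA mxtrace_mulC trmx_mul !mulmxA.
Qed.

Lemma Bq_ge0 (gam : 'I_d -> R) (U P : 'M[R]_d) q Z : 0 < q -> (forall k, 0 <= gam k) ->
  P = \sum_(k < d) gam k *: (col k U *m (col k U)^T) -> 0 <= Bq P q Z.
Proof.
move=> q0 g0 hP; rewrite /Bq (@trZZP _ _ _ Z hP); apply: addr_ge0.
  by apply: sumr_ge0 => k _; apply: mulr_ge0 => //; exact: tr_AtA_ge0.
apply: mulr_ge0; first by apply: divr_ge0 => //; exact: ltW.
have -> : Z + Z^T = (Z + Z^T)^T by rewrite trmxD trmxK addrC.
rewrite {2}trmxD trmxK addrC; exact: tr_AtA_ge0.
Qed.

Lemma Bq_eq0 (gam : 'I_d -> R) (U P : 'M[R]_d) q Z : 0 < q -> (forall k, 0 <= gam k) ->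
  P = \sum_(k < d) gam k *: (col k U *m (col k U)^T) ->
  (Bq P q Z = 0 <-> Z^T = - Z /\ Z *m P = 0).
Proof.
move=> q0 g0 hP; have hS : (Z + Z^T)^T = Z + Z^T by rewrite trmxD trmxK addrC.
have t1 : 0 <= \tr (Z^T *m Z *m P).
  by rewrite (@trZZP _ _ _ Z hP); apply: sumr_ge0 => k _; apply: mulr_ge0 => //; exact: tr_AtA_ge0.
have t2 : 0 <= \tr ((Z + Z^T) *m (Z + Z^T)).
  by rewrite -{1}hS; exact: tr_AtA_ge0.
have q4 : 0 < q / 4 by apply: divr_gt0.
split.
  rewrite /Bq => h.
  have h1 : \tr (Z^T *m Z *m P) = 0 by nra.
  have h2 : \tr ((Z + Z^T) *m (Z + Z^T)) = 0 by nra.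
  split.
    move: h2; rewrite -{1}hS => /tr_AtA_eq0 /eqP; rewrite addr_eq0 => /eqP hz.
    by rewrite {2}hz opprK.
  move: h1; rewrite (@trZZP _ _ _ Z hP) => h1.
  have h3 := psumr_eq0P (fun k _ => mulr_ge0 (g0 k) (tr_AtA_ge0 _ _ (Z *m col k U))) h1.
  rewrite hP mulmx_sumr; apply: big1 => k _.
  have /eqP := h3 k isT; rewrite mulf_eq0 => /orP[/eqP ->|/eqP /tr_AtA_eq0 hz].
    by rewrite scale0r mulmx0.
  by rewrite -scalemxAr mulmxA hz mul0mx scaler0.
move=> [hZ hZP]; rewrite /Bq -mulmxA hZP mulmx0 mxtrace0 hZ subrr mul0mx mxtrace0.
by rewrite mulr0 addr0.
Qed.

End Tr.
Arguments Fq {R d}. Arguments Gq {R d}. Arguments Bq {R d}.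

Section Basis.
Variables (R : realType) (d : nat) (U : 'M[R]_d).
Hypothesis hU : U^T *m U = 1%:M.

Definition bf (A : 'M[R]_d) i j := (U^T *m A *m U) i j.

Lemma hU' : U *m U^T = 1%:M.
Proof. exact: mulmx1C. Qed.

Lemma colmul m n p (A : 'M[R]_(m, n)) (B : 'M[R]_(n, p)) k : col k (A *m B) = A *m col k B.
Proof. by rewrite !colE mulmxA. Qed.

Lemma bf_col A i j : ((col i U)^T *m A *m col j U) 0 0 = bf A i j.
Proof.
rewrite tr_col -row_mul -row_mul -colmul /bf.
by rewrite !mxE.
Qed.

Lemma bfM A B i j : bf (A *m B) i j = \sum_k bf A i k * bf B k j.
Proof.
rewrite /bf; have -> : U^T *m (A *m B) *m U = (U^T *m A *m U) *m (U^T *m B *m U).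
  by rewrite -!mulmxA (mulmxA U) hU' mul1mx.
by rewrite mxE.
Qed.
Lemma bfT A i j : bf A^T i j = bf A j i.
Proof.
have e : U^T *m A^T *m U = (U^T *m A *m U)^T by rewrite !trmx_mul trmxK mulmxA.
by rewrite /bf e mxE.
Qed.

Lemma bfD A B i j : bf (A + B) i j = bf A i j + bf B i j.
Proof. by rewrite /bf mulmxDr mulmxDl mxE. Qed.

Lemma bfN A i j : bf (- A) i j = - bf A i j.
Proof. by rewrite /bf mulmxN mulNmx mxE. Qed.

Lemma bfB A B i j : bf (A - B) i j = bf A i j - bf B i j.
Proof. by rewrite bfD bfN. Qed.

Lemma bfZ a A i j : bf (a *: A) i j = a * bf A i j.
Proof. by rewrite /bf -scalemxAr -scalemxAl mxE. Qed.

Lemma bf0 i j : bf 0 i j = 0.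
Proof. by rewrite /bf mulmx0 mul0mx mxE. Qed.

Lemma bf1 i j : bf 1%:M i j = (i == j)%:R.
Proof. by rewrite /bf mulmx1 hU mxE. Qed.

Lemma bf_sum (I : finType) (P : pred I) (F : I -> 'M[R]_d) i j :
  bf (\sum_(k | P k) F k) i j = \sum_(k | P k) bf (F k) i j.
Proof.
rewrite /bf mulmx_sumr mulmx_suml summxE; apply: eq_bigr => k _; by [].
Qed.

Lemma bf_inj A : (forall i j, bf A i j = 0) -> A = 0.
Proof.
move=> h; have h0 : U^T *m A *m U = 0 by apply/matrixP => i j; rewrite [RHS]mxE; exact: h.
have -> : A = U *m (U^T *m A *m U) *m U^T.
  by rewrite !mulmxA hU' mul1mx -mulmxA hU' mulmx1.
by rewrite h0 mulmx0 mul0mx.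
Qed.

Lemma bfE a b i j : bf (col a U *m (col b U)^T) i j = (i == a)%:R * (j == b)%:R.
Proof.
have e0 : forall a, U^T *m col a U = delta_mx a 0 by move=> c; rewrite -colmul hU col1.
have e2 : (col b U)^T *m U = delta_mx 0 b.
  by apply: trmx_inj; rewrite trmx_mul trmxK trmx_delta e0.
rewrite /bf mulmxA e0 -mulmxA e2 mul_delta_mx mxE.
by case: (i == a); case: (j == b); rewrite ?mul1r ?mul0r.
Qed.

Lemma sum_deltal (F : 'I_d -> R) i : \sum_k (i == k)%:R * F k = F i.
Proof.
rewrite (bigD1 i) //= eqxx mul1r big1 ?addr0 // => k /negbTE; rewrite eq_sym => ->.
by rewrite mul0r.
Qed.

Lemma sum_deltar (F : 'I_d -> R) i : \sum_k F k * (k == i)%:R = F i.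
Proof.
rewrite (bigD1 i) //= eqxx mulr1 big1 ?addr0 // => k /negbTE ->.
by rewrite mulr0.
Qed.

Lemma sum_only (F : 'I_d -> R) i : (forall k, k != i -> F k = 0) -> \sum_k F k = F i.
Proof. by move=> h; rewrite (bigD1 i) //= big1 ?addr0 // => k /h. Qed.

Variables (gam : 'I_d -> R) (P : 'M[R]_d).
Hypothesis hP : P = \sum_(k < d) gam k *: (col k U *m (col k U)^T).

Lemma bfP i j : bf P i j = (i == j)%:R * gam j.
Proof.
rewrite hP bf_sum (@sum_only _ j) => [|k kj]; last by rewrite bfZ bfE [j == k]eq_sym (negbTE kj) !mulr0.
rewrite bfZ bfE eqxx mulr1 eq_sym; case: eqP => [->|_]; by rewrite ?mulr1 ?mul1r ?mulr0 ?mul0r ?eqxx.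
Qed.

Lemma Psym : P^T = P.
Proof.
apply/eqP; rewrite -subr_eq0; apply/eqP; apply: bf_inj => i j.
rewrite bfB bfT !bfP eq_sym; case: eqP => [->|]; by rewrite ?subrr ?mul0r ?subr0.
Qed.

Variables (Q : 'M[R]_d) (l : nat).
Hypotheses (hQT : Q^T = Q) (hQQ : Q *m Q = Q) (hQP : (Q == P)%MS)
  (hpos : forall k : 'I_d, (0 < gam k) = (k < l)%N) (g0 : forall k, 0 <= gam k).

Lemma gam0 (k : 'I_d) : (l <= k)%N -> gam k = 0.
Proof.
move=> h; have := g0 k; rewrite le_eqVlt hpos ltnNge h orbF => /eqP <-; by [].
Qed.

Lemma bfQ i j : bf Q i j = (i == j)%:R * (j < l)%:R.
Proof.
case/andP: hQP => /submxP [W1 e1] /submxP [W2 e2].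
case: (ltnP j l) => hj.
  have ePQ : P = Q *m P.
    apply: trmx_inj; rewrite trmx_mul hQT Psym.
    by rewrite {2}e2 -mulmxA hQQ -e2.
  have : bf P i j = bf Q i j * gam j.
    rewrite {1}ePQ bfM (@sum_only _ j) => [|k kj]; last by rewrite bfP (negbTE kj) mul0r mulr0.
    by rewrite bfP eqxx mul1r.
  rewrite bfP mulr1 => h.
  have gj : 0 < gam j by rewrite hpos.
  apply: (mulIf (lt0r_neq0 gj)); by rewrite -h.
rewrite e1 bfM (@sum_only _ j) => [|k kj]; last by rewrite bfP (negbTE kj) mul0r mulr0.
by rewrite bfP eqxx mul1r gam0 // mulr0 mulr0.
Qed.

Lemma bf1Q i j : bf (1%:M - Q) i j = (i == j)%:R * (1 - (j < l)%:R).
Proof. by rewrite bfB bf1 bfQ mulrBr mulr1. Qed.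

Lemma bfX (M : 'M[R]_d) a b :
  bf ((1%:M - Q) *m M *m (1%:M - Q)) a b = (1 - (a < l)%:R) * bf M a b * (1 - (b < l)%:R).
Proof.
rewrite bfM (@sum_only _ b) => [|k kb]; last by rewrite bf1Q (negbTE kb) mul0r mulr0.
rewrite bf1Q eqxx mul1r bfM (@sum_only _ a) => [|k ka]; last by rewrite bf1Q eq_sym (negbTE ka) !mul0r.
by rewrite bf1Q eqxx mul1r.
Qed.

Lemma bfS (c : 'I_d -> 'I_d -> R) a b :
  bf (\sum_(i < d | (i < l)%N) \sum_(j < d) c i j *: (col i U *m (col j U)^T)) a b
  = (a < l)%:R * c a b.
Proof.
rewrite bf_sum big_mkcond /= (@sum_only _ a) => [|i ia]; last first.
  case: ifP => // _; rewrite bf_sum big1 // => j _.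
  by rewrite bfZ bfE eq_sym (negbTE ia) mul0r mulr0.
case: ifP => _; last by rewrite mul0r.
rewrite bf_sum (@sum_only _ b) => [|j jb]; last by rewrite bfZ bfE eq_sym (negbTE jb) mulr0 mulr0.
by rewrite bfZ bfE !eqxx !mulr1 mul1r.
Qed.

Lemma G_zero (M : 'M[R]_d) (q r : R) : 0 < q -> M^T = M ->
  let mu := fun i j => bf M i j in
  let S := \sum_(i < d | (i < l)%N) \sum_(j < d)
     ((gam i * (r / q) * mu i j) / (2 / q * gam i * gam j + gam i + gam j))
       *: (col i U *m (col j U)^T) in
  let Y0 := - ((r / q) *: ((1%:M - Q) *m M *m (1%:M - Q))) - 2 *: S in
  Gq P M q r Y0 = 0.
Proof.
move=> q0 hM mu S Y0.
have hmu : forall a b, mu a b = mu b a by move=> a b; rewrite /mu -bfT hM.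
have hY : forall a b, bf Y0 a b = - (r / q) * ((1 - (a < l)%:R) * mu a b * (1 - (b < l)%:R))
     - 2 * ((a < l)%:R * ((gam a * (r / q) * mu a b) / (2 / q * gam a * gam b + gam a + gam b))).
  by move=> a b; rewrite /Y0 bfB bfN !bfZ bfX /S bfS mulNr.
apply: bf_inj => a b.
rewrite /Gq !bfD !bfZ (bfD Y0 Y0^T) bfT bfM (@sum_only _ b) => [|k kb]; last by rewrite bfP (negbTE kb) mul0r mulr0.
rewrite bfP eqxx mul1r !hY -/(mu a b) (hmu b a).
have qn : q != 0 by rewrite gt_eqF.
have t1 : (true : nat)%:R = 1 :> R by [].
have f0 : (false : nat)%:R = 0 :> R by [].
case: (ltnP a l) => ha; case: (ltnP b l) => hb.
- have ga : 0 < gam a by rewrite hpos.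
  have gb : 0 < gam b by rewrite hpos.
  have dn : 2 / q * gam a * gam b + gam a + gam b != 0.
    by rewrite gt_eqF // addr_gt0 // addr_gt0 // mulr_gt0 // mulr_gt0 // divr_gt0.
  have dn' : 2 / q * gam b * gam a + gam b + gam a != 0.
    by rewrite gt_eqF // addr_gt0 // addr_gt0 // mulr_gt0 // mulr_gt0 // divr_gt0.
  rewrite /= ?t1 ?f0; field.
  rewrite qn /=; apply: lt0r_neq0; nra.
- have ga : 0 < gam a by rewrite hpos.
  rewrite (@gam0 b hb) /= ?t1 ?f0.
  have gn : gam a != 0 by rewrite gt_eqF.
  field. by rewrite gn qn.
- have gb : 0 < gam b by rewrite hpos.
  rewrite (@gam0 a ha) /= ?t1 ?f0.
  have gn : gam b != 0 by rewrite gt_eqF.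
  field. by rewrite gn qn.
- rewrite (@gam0 a ha) (@gam0 b hb) /= ?t1 ?f0.
  rewrite ?mul0r ?mulr0; field. by rewrite qn.
Qed.

End Basis.
Arguments bf {R d} U A i j.

Section Rank.
Variables (R : realType) (d : nat) (U : 'M[R]_d).
Hypothesis hU : U^T *m U = 1%:M.
Variables (gam : 'I_d -> R) (P : 'M[R]_d).
Hypothesis hP : P = \sum_(k < d) gam k *: (col k U *m (col k U)^T).

Lemma exists_c : (forall i j : 'I_d, (i <= j)%N -> gam j <= gam i) -> (forall k, 0 <= gam k) ->
  exists c, (c <= d)%N /\ forall k : 'I_d, (0 < gam k) = (k < c)%N.
Proof.
move=> hs g0.
pose Pn n := (n == d) || [exists k : 'I_d, (k == n :> nat) && (gam k <= 0)].
have ex : exists n, Pn n by exists d; rewrite /Pn eqxx.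
case: (ex_minnP ex) => c Pc cmin.
exists c; split; first by apply: cmin; rewrite /Pn eqxx.
move=> k; case: (ltnP k c) => hk.
  rewrite lt_neqAle g0 andbT eq_sym; apply/negP => /eqP gk.
  have : Pn k by apply/orP; right; apply/existsP; exists k; rewrite eqxx gk lexx.
  by move/cmin; rewrite leqNgt hk.
apply/negbTE; rewrite -leNgt.
case/orP: Pc => [/eqP cd|/existsP [k0 /andP [/eqP k0c gk0]]].
  by move: hk; rewrite cd leqNgt ltn_ord.
apply: le_trans gk0; apply: hs; by rewrite k0c.
Qed.

Lemma rankP c : (c <= d)%N -> (forall k : 'I_d, (0 < gam k) = (k < c)%N) ->
  (forall k, 0 <= gam k) -> \rank P = c.
Proof.
move=> cd hc g0.
pose g := \row_k gam k.
have hPD : P = U *m diag_mx g *m U^T.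
  apply/eqP; rewrite -subr_eq0; apply/eqP; apply: (@bf_inj _ _ U hU) => i j.
  rewrite bfB (@bfP _ _ U hU gam P hP) /bf !mulmxA hU mul1mx -mulmxA hU mulmx1 !mxE.
  case: eqP => [->|ij]; first by rewrite mul1r mulr1n subrr.
  by rewrite mul0r mulr0n subrr.
have [UTu Uu] := mulmx1_unit hU.
rewrite hPD mxrankMfree; last by rewrite row_free_unit.
rewrite -mxrank_tr trmx_mul mxrankMfree; last by rewrite row_free_unit.
rewrite mxrank_tr.
pose g' := \row_k (if (k < c)%N then gam k else 1).
have -> : diag_mx g = pid_mx c *m diag_mx g'.
  apply/matrixP => i j; rewrite mul_mx_diag !mxE.
  case: (ltnP i c) => hi.
    case: eqP => [eij|ij]; first by rewrite -eij eqxx hi mulr1n mul1r.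
    have -> : (i == j :> nat) = false by apply/eqP => e; apply: ij; apply: val_inj.
    by rewrite mulr0n mul0r.
  have gi : gam i = 0.
    by apply/eqP; rewrite eq_le g0 andbT leNgt hc ltnNge hi.
  by case: eqP; rewrite andbF mul0r ?gi ?mulr1n ?mulr0n.
rewrite mxrankMfree; first by rewrite rank_pid_mx.
rewrite row_free_unit unitmxE det_diag unitfE; apply/prodf_neq0 => k _; rewrite mxE.
case: ifP => hk; last exact: oner_neq0.
by rewrite gt_eqF // hc.
Qed.

End Rank.


Theorem mainTheorem3 (R : realType) (d : nat)
  (Os : R) (Oa : 'M[R]_d) (D Sig0 T eps : R) (m0 : 'cV[R]_d) (Dh : 'M[R]_d)
  (gam : 'I_d -> R) (U Q : 'M[R]_d) :
  (0 < d)%N -> Os < 0 -> Oa^T = - Oa -> 0 < D -> 0 < Sig0 -> 0 < T -> 0 <= eps ->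
  Dh^T = Dh ->
  let Om := Os%:M + Oa in
  let P := Pmat Om m0 T in
  (* eigendecomposition P = sum_i gam_i u_i u_i^T, u_i = col i U orthonormal *)
  U^T *m U = 1%:M ->
  P = \sum_(i < d) gam i *: (col i U *m (col i U)^T) ->
  (forall i j : 'I_d, (i <= j)%N -> gam j <= gam i) ->
  (forall i : 'I_d, 0 <= gam i) ->
  (* Q = orthogonal projector onto range(P) *)
  Q^T = Q -> Q *m Q = Q -> (Q == P)%MS ->
  let l := \rank P in
  let mu := fun i j : 'I_d => ((col i U)^T *m (Dh - D%:M) *m col j U) 0 0 in
  let q := qval Os D Sig0 T eps in
  let r := rval Os D Sig0 T eps in
  let L := lossL Om P Dh Os D q r in
  let Om0 := Om - (r / q) *: ((1%:M - Q) *m (Dh - D%:M) *m (1%:M - Q))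
             - 2 *: \sum_(i < d | (i < l)%N) \sum_(j < d)
                 ((gam i * (r / q) * mu i j)
                    / (2 / q * gam i * gam j + gam i + gam j))
                 *: (col i U *m (col j U)^T) in
  (forall X : 'M[R]_d,
     is_minimizer L X <->
     exists K : 'M[R]_d, K^T = - K /\ K *m P = 0 /\ X = Om0 + K)
  /\
  ((forall X Y : 'M[R]_d, is_minimizer L X -> is_minimizer L Y -> X = Y)
     <-> (d - 1 <= l)%N).
Proof.
move=> d0 Os0 hOa D0 S0 T0 eps0 hDh Om P hU hP hs g0 hQT hQQ hQP l mu q r L Om0.
have q0 : 0 < q by exact: qval_gt0.
have [c [cd hc]] := @exists_c _ _ gam hs g0.
have hl : l = c by exact: (@rankP _ _ U hU gam P hP c cd hc g0).
have hpos : forall k : 'I_d, (0 < gam k) = (k < l)%N by move=> k; rewrite hl hc.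
set M := Dh - D%:M.
have hM : M^T = M by rewrite /M trmxB hDh tr_scalar_mx.
have hPs : P^T = P by exact: (@Psym _ _ U hU gam P hP).
have hOm : Om^T = (2 * Os)%:M - Om.
  have e2 : (2 * Os)%:M = Os%:M + Os%:M :> 'M[R]_d by rewrite mulr_natl mulr2n raddfD.
  rewrite /Om trmxD tr_scalar_mx hOa e2; apply/matrixP => i j; rewrite !mxE; ring.
have hmu : mu = (fun i j => bf U M i j).
  by apply: funext => i; apply: funext => j; rewrite /mu bf_col.
set S := \sum_(i < d | (i < l)%N) \sum_(j < d)
     ((gam i * (r / q) * bf U M i j) / (2 / q * gam i * gam j + gam i + gam j))
       *: (col i U *m (col j U)^T).
set Y0 := - ((r / q) *: ((1%:M - Q) *m M *m (1%:M - Q))) - 2 *: S.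
have hOm0 : Om0 = Om + Y0 by rewrite /Om0 hmu /Y0 addrA.
have hG : Gq P M q r Y0 = 0.
  exact: (@G_zero _ _ U hU gam P hP Q l hQT hQQ hQP hpos g0 M q r q0 hM).
have LOm0 : L Om0 = Fq P M q r Y0 by rewrite /L hOm0 lossL_shift.
have keyL : forall X, L X = L Om0 + Bq P q (X - Om0).
  move=> X.
  have eX : Om + (Y0 + (X - Om0)) = X by rewrite hOm0 addrA addrC subrK.
  rewrite /L -{1}eX lossL_shift // Fq_expand // hG mulmx0 mxtrace0 mulr0 addr0.
  by rewrite -LOm0.
have Bge0 : forall Z, 0 <= Bq P q Z by move=> Z; exact: (@Bq_ge0 _ _ gam U P q Z q0 g0 hP).
have minE : forall X, is_minimizer L X <-> Bq P q (X - Om0) = 0.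
  move=> X; split.
    move=> /(_ Om0); rewrite keyL => h.
    by apply/eqP; rewrite eq_le Bge0 andbT -(lerD2l (L Om0)) addr0.
  move=> hB Y; rewrite keyL hB addr0 (keyL Y) lerDl; exact: Bge0.
have minK : forall X, is_minimizer L X <->
    exists K : 'M[R]_d, K^T = - K /\ K *m P = 0 /\ X = Om0 + K.
  move=> X; rewrite minE (@Bq_eq0 _ _ gam U P q (X - Om0) q0 g0 hP); split.
    by move=> [h1 h2]; exists (X - Om0); split => //; split => //; rewrite addrC subrK.
  move=> [K [h1 [h2 ->]]]; have -> : Om0 + K - Om0 = K by rewrite addrAC subrr add0r.
  by split.
have gz : forall k : 'I_d, (l <= k)%N -> gam k = 0.
  by move=> k hk; apply/eqP; rewrite eq_le g0 andbT leNgt hpos -leqNgt hk.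
have bfKP : forall K i j, bf U (K *m P) i j = bf U K i j * gam j.
  move=> K i j; rewrite (@bfM _ _ U hU) (@sum_only _ _ _ j) => [|k kj]; last first.
    by rewrite (@bfP _ _ U hU gam P hP) (negbTE kj) mul0r mulr0.
  by rewrite (@bfP _ _ U hU gam P hP) eqxx mul1r.
have skew0 : (d - 1 <= l)%N -> forall K, K^T = - K -> K *m P = 0 -> K = 0.
  move=> hd K hK hKP; apply: (@bf_inj _ _ U hU) => i j.
  have e2 : forall a b, bf U K b a = - bf U K a b.
    by move=> a b; rewrite -bfT hK bfN.
  have z : forall a b : 'I_d, (b < l)%N -> bf U K a b = 0.
    move=> a b hb; have := bfKP K a b; rewrite hKP bf0 => /esym /eqP.
    rewrite mulf_eq0 => /orP [/eqP //|/eqP gb].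
    by move: hb; rewrite -hpos gb ltxx.
  case: (ltnP j l) => hj; first exact: z.
  case: (ltnP i l) => hi; first by rewrite e2 z // oppr0.
  have ij : i = j.
    apply: val_inj; have h1 := ltn_ord i; have h2 := ltn_ord j; rewrite /=; clearbody l; lia.
  rewrite ij; have := e2 j j; lra.
split; first exact: minK.
split; last first.
  move=> hd X Y /minK [K1 [h1 [h2 ->]]] /minK [K2 [h3 [h4 ->]]].
  by rewrite (skew0 hd K1 h1 h2) (skew0 hd K2 h3 h4).
move=> huniq; rewrite leqNgt; apply/negP => hlt.
have ha : (d - 1 < d)%N by lia.
have hb : (d - 2 < d)%N by lia.
pose a : 'I_d := Ordinal ha.
pose b : 'I_d := Ordinal hb.
have la : (l <= a)%N by rewrite /=; lia.
have lb : (l <= b)%N by rewrite /=; lia.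
have ab : (a == b) = false by apply/eqP => e; have := congr1 val e; rewrite /=; lia.
pose K := col a U *m (col b U)^T - col b U *m (col a U)^T.
have bfK : forall i j, bf U K i j = (i == a)%:R * (j == b)%:R - (i == b)%:R * (j == a)%:R.
  by move=> i j; rewrite /K bfB !(@bfE _ _ U hU).
have hK : K^T = - K by rewrite /K trmxB !trmx_mul !trmxK opprB.
have hKP : K *m P = 0.
  apply: (@bf_inj _ _ U hU) => i j; rewrite bfKP.
  case: (eqVneq j b) => [->|jb]; first by rewrite gz // mulr0.
  case: (eqVneq j a) => [->|ja]; first by rewrite gz // mulr0.
  by rewrite bfK (negbTE jb) (negbTE ja) !mulr0 subrr mul0r.
have m1 : is_minimizer L Om0 by apply/minK; exists 0; rewrite trmx0 oppr0 mul0mx addr0.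
have m2 : is_minimizer L (Om0 + K) by apply/minK; exists K.
have := huniq _ _ m1 m2 => /eqP; rewrite -subr_eq0 opprD addrA subrr add0r oppr_eq0 => /eqP K0.
have := bfK a b; rewrite K0 bf0 !eqxx ab /= => /eqP.
by rewrite mulr1 mul0r subr0 eq_sym oner_eq0.
Qed.
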